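(* Let $A\in\mathbb{C}^{n\times n}$ be nonsingular, $b\in\mathbb{C}^n$, $x_0\in\mathbb{C}^n$ and $r_0=b-Ax_0$. Let $W\in\mathbb{C}^{n\times k}$ have linearly independent columns spanning a subspace $\mathcal{W}$. Define $Q_3=W(W^HA^HAW)^{-1}W^H$, $P_4=I_n-Q_3A^HA$, $P_5=I_n-AQ_3A^H$, $\hat A=P_5A$, $\hat r_0=P_5r_0$, and let $\mathcal{K}=\mathcal{K}_m(\hat A,\hat r_0)$. Then the following two sets of conditions are equivalent: (i) $x_m\in x_0+\mathcal{W}+\mathcal{K}$ and $r_m=b-Ax_m\perp (A\mathcal{W}+A\mathcal{K})$; (ii) $\tilde x_m\in x_0+\mathcal{K}$ and $\tilde r_m:=P_5(b-A\tilde x_m)\perp A\mathcal{K}$, in the following sense: if $\tilde x_m$ satisfies (ii), then $x_m:=P_4\tilde x_m+Q_3A^Hb$ satisfies (i) and $r_m=\tilde r_m$; conversely, if $x_m$ satisfies (i), then there exists $\tilde x_m$ satisfying (ii) with $x_m=P_4\tilde x_m+Q_3A^Hb$ and $r_m=\tilde r_m$.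
   Context: $\mathcal{K}_m(B,v)=\mathrm{span}(v,Bv,\dots,B^{m-1}v)$ denotes the Krylov subspace. Orthogonality $\perp$ is with respect to the canonical Euclidean inner product $\langle x,y\rangle=y^Hx$ on $\mathbb{C}^n$; for subspaces $\mathcal{U}$, $A\mathcal{U}=\{Au: u\in\mathcal{U}\}$. ${}^H$ denotes conjugate transpose. *)

(* Defs.v *)
(* Complex numbers: an arbitrary numClosedFieldType C
   (e.g. algC), with conjugation Num.conj (z^* ). *)
From HB Require Import structures.
From mathcomp Require Import all_boot all_order all_algebra.
Set Implicit Arguments. Unset Strict Implicit. Unset Printing Implicit Defensive.
Import Order.TTheory GRing.Theory Num.Theory.
Local Open Scope ring_scope.

Definition conjT (C : numClosedFieldType) (p q : nat) (A : 'M[C]_(p, q)) : 'M[C]_(q, p) :=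
  (map_mx Num.conj A)^T.

Definition cdot (C : numClosedFieldType) (n : nat) (x y : 'cV[C]_n) : C :=
  (conjT y *m x) 0 0.

Definition in_colspan (C : numClosedFieldType) (n k : nat) (W : 'M[C]_(n, k)) (y : 'cV[C]_n) : Prop :=
  exists c : 'cV[C]_k, y = W *m c.

Definition in_krylov (C : numClosedFieldType) (n m : nat) (B : 'M[C]_n) (v y : 'cV[C]_n) : Prop :=
  exists c : 'I_m -> C, y = \sum_(i < m) c i *: iter i (mulmx B) v.

(* Main.v *)
Require Import Defs.
From HB Require Import structures.
From mathcomp Require Import all_boot all_order all_algebra.
Import Order.TTheory GRing.Theory Num.Theory.
Local Open Scope ring_scope.
Section S.
Variable C : numClosedFieldType.
Lemma conjT_mul p q r (X : 'M[C]_(p,q)) (Y : 'M[C]_(q,r)) : conjT (X *m Y) = conjT Y *m conjT X.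
Proof. by rewrite /conjT map_mxM trmx_mul. Qed.
Lemma conjTD p q (X Y : 'M[C]_(p,q)) : conjT (X + Y) = conjT X + conjT Y.
Proof. by rewrite /conjT map_mxD linearD. Qed.
Lemma conjTK p q (X : 'M[C]_(p,q)) : conjT (conjT X) = X.
Proof. by apply/matrixP=> i j; rewrite /conjT !mxE conjCK. Qed.
Lemma cdotDr n (r y1 y2 : 'cV[C]_n) : cdot r (y1 + y2) = cdot r y1 + cdot r y2.
Proof. by rewrite /cdot conjTD mulmxDl mxE. Qed.
Lemma cdot_orth n k (B : 'M[C]_(n,k)) (r : 'cV[C]_n) :
  (forall c, cdot r (B *m c) = 0) -> conjT B *m r = 0.
Proof.
move=> H; apply/matrixP=> i j; rewrite (ord1 j) [RHS]mxE.
have := H (delta_mx i 0); rewrite /cdot conjT_mul -mulmxA.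
have -> : conjT (delta_mx i 0 : 'cV[C]_k) = delta_mx 0 i.
  by rewrite /conjT map_delta_mx trmx_delta.
by rewrite -rowE mxE.
Qed.
Lemma norm_eq0 n (u : 'rV[C]_n) : u *m conjT u = 0 -> u = 0.
Proof.
move=> H; have H' : (u *m conjT u) 0 0 = 0 by rewrite H mxE.
move: H'; rewrite mxE => H'.
apply/matrixP=> i j; rewrite (ord1 i) mxE.
have H2 : \sum_(l < n) `|u 0 l| ^+ 2 = 0.
  by rewrite -[RHS]H'; apply: eq_bigr=> l _; rewrite normCK /conjT !mxE.
have := psumr_eq0P (fun l _ => exprn_ge0 2 (normr_ge0 (u 0 l))) H2 (i:=j) isT.
by move/eqP; rewrite sqrf_eq0 normr_eq0 => /eqP.
Qed.
Lemma krylov0 n m (B : 'M[C]_n) v : in_krylov m B v 0.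
Proof. by exists (fun _ => 0); rewrite big1 // => i _; rewrite scale0r. Qed.
Lemma M_unit n k (A : 'M[C]_n) (W : 'M[C]_(n,k)) : A \in unitmx -> \rank W = k ->
  conjT W *m conjT A *m A *m W \in unitmx.
Proof.
move=> hA hW; rewrite unitmxE unitfE; apply/negP => /det0P [v vn0 hv].
have hu : v *m conjT (A *m W) = 0.
  apply: norm_eq0; rewrite !conjT_mul !conjTK !mulmxA.
  by move: hv; rewrite !mulmxA => ->; rewrite mul0mx.

have h1 : A *m (W *m conjT v) = 0.
  by rewrite mulmxA -[LHS]conjTK conjT_mul conjTK hu /conjT map_mx0 trmx0.
have h2 : W *m conjT v = 0.
  by rewrite -[LHS](mulKmx hA) h1 mulmx0.
have hf : row_free W^T by rewrite /row_free mxrank_tr hW.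
have h3 : (conjT v)^T = 0.
  apply: (row_free_inj hf); rewrite mul0mx -trmx_mul h2 trmx0 //.
have : v = 0.
  by rewrite -[v]conjTK; rewrite -[conjT v]trmxK h3 trmx0 /conjT map_mx0 trmx0.
by move/eqP; rewrite (negbTE vn0).
Qed.
End S.

Theorem proposition1 (C : numClosedFieldType) (n k m : nat)
  (A : 'M[C]_n) (b x0 : 'cV[C]_n) (W : 'M[C]_(n, k))
  (hA : A \in unitmx) (hW : \rank W = k) :
  let r0 := b - A *m x0 in
  let Q3 := W *m invmx (conjT W *m conjT A *m A *m W) *m conjT W in
  let P4 := 1%:M - Q3 *m conjT A *m A in
  let P5 := 1%:M - A *m Q3 *m conjT A in
  let Ahat := P5 *m A in
  let rhat0 := P5 *m r0 in
  (* condition (i) on x *)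
  let cond_i := fun x : 'cV[C]_n =>
    (exists w z : 'cV[C]_n, in_colspan W w /\ in_krylov m Ahat rhat0 z /\ x = x0 + w + z) /\
    (forall w z : 'cV[C]_n, in_colspan W w -> in_krylov m Ahat rhat0 z ->
       cdot (b - A *m x) (A *m w + A *m z) = 0) in
  (* condition (ii) on xt *)
  let cond_ii := fun xt : 'cV[C]_n =>
    (exists z : 'cV[C]_n, in_krylov m Ahat rhat0 z /\ xt = x0 + z) /\
    (forall z : 'cV[C]_n, in_krylov m Ahat rhat0 z ->
       cdot (P5 *m (b - A *m xt)) (A *m z) = 0) in
  (forall xt : 'cV[C]_n, cond_ii xt ->
     let xm := P4 *m xt + Q3 *m conjT A *m b in
     cond_i xm /\ b - A *m xm = P5 *m (b - A *m xt)) /\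
  (forall xm : 'cV[C]_n, cond_i xm ->
     exists xt : 'cV[C]_n, cond_ii xt /\
       xm = P4 *m xt + Q3 *m conjT A *m b /\
       b - A *m xm = P5 *m (b - A *m xt)).
Proof.
pose M := conjT W *m conjT A *m A *m W.
have HM : M \in unitmx := @M_unit C n k A W hA hW.
move=> r0 Q3 P4 P5 Ahat rhat0 cond_i cond_ii.
set B := A *m W.
have hB : conjT B = conjT W *m conjT A by rewrite conjT_mul.
have hMB : M = conjT B *m B by rewrite hB !mulmxA.
have hQ3 : A *m Q3 *m conjT A = B *m invmx M *m conjT B by rewrite /Q3 hB !mulmxA.
have hAW : A *m W = B by [].
clearbody B.
have hBP5 : conjT B *m P5 = 0.
  by rewrite /P5 mulmxBr mulmx1 hQ3 -!mulmxA (mulmxA (conjT B) B) -hMB mulKVmx // subrr.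
have F2 : forall v, P4 *m v + Q3 *m conjT A *m b = v + Q3 *m conjT A *m (b - A *m v).
  move=> v; rewrite /P4 mulmxBl mul1mx mulmxBr !mulmxA.
  by rewrite addrAC addrA.
have F3 : forall v, b - A *m (v + Q3 *m conjT A *m (b - A *m v)) = P5 *m (b - A *m v).
  move=> v; rewrite mulmxDr /P5 mulmxBl mul1mx !mulmxA.
  by rewrite opprD addrA.
split.
  move=> xt [[z [hz ->]] horth] xm.
  have Exm : xm = (x0 + z) + Q3 *m conjT A *m (b - A *m (x0+z)) by rewrite /xm F2.
  have Er : b - A *m xm = P5 *m (b - A *m (x0+z)) by rewrite Exm F3.
  split => //; split.
    exists (Q3 *m conjT A *m (b - A *m (x0 + z))), z; split.
      by exists (invmx M *m conjT W *m conjT A *m (b - A*m (x0+z))); rewrite /Q3 !mulmxA.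
    by split => //; rewrite Exm addrAC.
  move=> w z' [c ->] hz'; rewrite Er cdotDr (horth _ hz') addr0.
  rewrite mulmxA hAW /cdot conjT_mul -mulmxA (mulmxA (conjT B)) hBP5 mul0mx mulmx0.
  by rewrite mxE.
move=> xm [[w [z [[c ->] [hz ->]]]] horth].
set xt := x0 + z.
have hxm : x0 + W *m c + z = xt + W *m c by rewrite /xt addrAC.
have G : conjT B *m (b - A *m (xt + W *m c)) = 0.
  apply: cdot_orth => c'; rewrite -hxm.
  have := horth (W *m c') 0 (ex_intro _ c' erefl) (@krylov0 C n m Ahat rhat0).
  by rewrite mulmx0 addr0 mulmxA hAW.
have Ec : c = invmx M *m conjT B *m (b - A *m xt).
  move: G; rewrite (mulmxDr A) (mulmxA A W c) hAW opprD addrA mulmxBr mulmxA -hMB.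
  move/eqP; rewrite subr_eq0 => /eqP G.
  by rewrite -mulmxA G mulmxA mulVmx // mul1mx.
have Exm : x0 + W *m c + z = xt + Q3 *m conjT A *m (b - A *m xt).
  by rewrite hxm Ec /Q3 hB !mulmxA.
exists xt; split.
  split; first by exists z.
  move=> z' hz'; rewrite -F3 -Exm.
  have := horth 0 z' (ex_intro _ 0 (esym (mulmx0 _ _))) hz'.
  by rewrite mulmx0 add0r.
by split; [rewrite Exm F2 | rewrite Exm F3].
Qed.
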